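(* Fix $p\in[2,\infty)$ and $\alpha\in[1,\infty)$. Let $(X,\|\cdot\|_X)$ be a $K$-convex Banach space of Rademacher cotype $p$. Suppose that $m,n\in\mathbb N$ satisfy $$m\ge\frac{n^{1/p}}{\alpha K_p(X)C_p(X)}.$$ Then for every $f:\mathbb Z_{8m}^n\to X$, $$\sum_{j=1}^n\sum_{x\in\mathbb Z_{8m}^n}\frac{\|f(x+4me_j)-f(x)\|_X^p}{m^p}\lesssim_p\frac{(\alpha K_p(X)C_p(X))^p}{2^n}\sum_{\varepsilon\in\{-1,1\}^n}\sum_{x\in\mathbb Z_{8m}^n}\|f(x+\varepsilon)-f(x)\|_X^p.$$
   Context: $\mathbb Z_{8m}^n=(\mathbb Z/8m\mathbb Z)^n$, integer vectors added modulo $8m$; $e_j$ standard basis. $C_p(X)$ is the cotype $p$ constant: the least $C$ such that for all $N$ and $x_1,\ldots,x_N\in X$, $(\sum_j\|x_j\|^p)^{1/p}\le C(\mathbb E\|\sum_j\varepsilon_jx_j\|^p)^{1/p}$ ($\varepsilon$ uniform in $\{-1,1\}^N$); $X$ has cotype $p$ if $C_p(X)<\infty$. For $h:\{-1,1\}^N\to X$, its Rademacher projection is $\mathrm{Rad}(h)(\varepsilon)=\sum_{j=1}^N\big(2^{-N}\sum_{\delta}h(\delta)\delta_j\big)\varepsilon_j$; $K_p(X)$ is the least $K\in[1,\infty]$ such that $\sum_\varepsilon\|\mathrm{Rad}(h)(\varepsilon)\|^p\le K^p\sum_\varepsilon\|h(\varepsilon)\|^p$ for all $N$ and $h$; $X$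 is $K$-convex if $K_p(X)<\infty$. $a\lesssim_p b$ means $a\le c^pb$ for a universal constant $c$. *)

(* Defs.v *)
From mathcomp Require Import all_boot.
From Stdlib Require Import Reals.

Set Implicit Arguments.
Unset Strict Implicit.
Unset Printing Implicit Defensive.

(* x^p for x >= 0 and real p > 0, with 0^p = 0 (Stdlib's Rpower 0 p = 1). *)
Definition rpow (x p : R) : R :=
  if Rle_dec x 0 then 0%R else Rpower x p.

Record Banach := {
  carrier :> Type;
  vzero : carrier;
  vadd : carrier -> carrier -> carrier;
  vopp : carrier -> carrier;
  vscal : R -> carrier -> carrier;
  vnorm : carrier -> R;
  vaddA : forall x y z, vadd x (vadd y z) = vadd (vadd x y) z;
  vaddC : forall x y, vadd x y = vadd y x;
  vadd0 : forall x, vadd x vzero = x;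
  vaddN : forall x, vadd x (vopp x) = vzero;
  vscalA : forall a b x, vscal a (vscal b x) = vscal (a * b) x;
  vscal1 : forall x, vscal 1 x = x;
  vscalDr : forall a x y, vscal a (vadd x y) = vadd (vscal a x) (vscal a y);
  vscalDl : forall a b x, vscal (a + b) x = vadd (vscal a x) (vscal b x);
  vnorm_ge0 : forall x, (0 <= vnorm x)%R;
  vnorm_eq0 : forall x, vnorm x = 0%R -> x = vzero;
  vnormZ : forall a x, vnorm (vscal a x) = (Rabs a * vnorm x)%R;
  vnorm_tri : forall x y, (vnorm (vadd x y) <= vnorm x + vnorm y)%R;
  vcomplete : forall u : nat -> carrier,
    (forall eps, (0 < eps)%R -> exists N, forall k l, (N <= k)%coq_nat -> (N <= l)%coq_nat ->
        (vnorm (vadd (u k) (vopp (u l))) < eps)%R) ->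
    exists lim, forall eps, (0 < eps)%R -> exists N, forall k, (N <= k)%coq_nat ->
        (vnorm (vadd (u k) (vopp lim)) < eps)%R
}.

Definition vsub (X : Banach) (x y : X) : X := vadd x (vopp y).

Notation "\rsum_ ( i : T ) F" := (\big[Rplus/0%R]_(i : T) F)
  (at level 41, F at level 41, i, T at level 50).
Definition vsum (X : Banach) (N : nat) (F : 'I_N -> X) : X :=
  \big[@vadd X/vzero X]_(j < N) F j.

(* sign vectors {-1,1}^N are encoded by {ffun 'I_N -> bool}; true = +1 *)
Definition sgnR (b : bool) : R := if b then 1%R else (-1)%R.

Definition cotype_const (X : Banach) (p C : R) : Prop :=
  (0 <= C)%R /\
  forall (N : nat) (x : 'I_N -> X),
    (rpow (\rsum_(j : 'I_N) rpow (vnorm (x j)) p) (/ p)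
     <= C * rpow (/ 2 ^ N * \rsum_(e : {ffun 'I_N -> bool})
                   rpow (vnorm (vsum (fun j => vscal (sgnR (e j)) (x j)))) p) (/ p))%R.

Definition Rad (X : Banach) (N : nat) (h : {ffun 'I_N -> bool} -> X)
  (e : {ffun 'I_N -> bool}) : X :=
  vsum (fun j : 'I_N =>
    vscal (sgnR (e j))
      (vscal (/ 2 ^ N)%R
        (\big[@vadd X/vzero X]_(d : {ffun 'I_N -> bool}) vscal (sgnR (d j)) (h d)))).

Definition Kconvex_const (X : Banach) (p K : R) : Prop :=
  (1 <= K)%R /\
  forall (N : nat) (h : {ffun 'I_N -> bool} -> X),
    (\rsum_(e : {ffun 'I_N -> bool}) rpow (vnorm (Rad h e)) p
     <= rpow K p * \rsum_(e : {ffun 'I_N -> bool}) rpow (vnorm (h e)) p)%R.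

Definition is_least (P : R -> Prop) (c : R) : Prop :=
  P c /\ forall c', P c' -> (c <= c')%R.

(* C_p(X) and K_p(X): the least constants (finite, i.e. X has cotype p and is K-convex) *)
Definition cotype_constant (X : Banach) (p Cp : R) := is_least (cotype_const X p) Cp.
Definition Kconvex_constant (X : Banach) (p Kp : R) := is_least (Kconvex_const X p) Kp.

Definition addmod (N : nat) (x : 'I_N) (k : nat) : 'I_N :=
  Ordinal (ltn_pmod (x + k) (leq_ltn_trans (leq0n x) (ltn_ord x))).

Definition shift_dir (N n : nat) (x : {ffun 'I_n -> 'I_N}) (j : 'I_n) (a : nat)
  : {ffun 'I_n -> 'I_N} :=
  [ffun i => if i == j then addmod (x i) a else x i].

(* x + eps in Z_N^n, eps in {-1,1}^n (-1 is added as N - 1) *)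
Definition shift_sign (N n : nat) (x : {ffun 'I_n -> 'I_N}) (e : {ffun 'I_n -> bool})
  : {ffun 'I_n -> 'I_N} :=
  [ffun i => addmod (x i) (if e i then 1 else N.-1)].

(* Main.v *)
From HB Require Import structures.
Require Import Defs.
From mathcomp Require Import all_boot.
From Stdlib Require Import Reals Lra Lia.
Local Open Scope R_scope.

Ltac drd x := unfold rpow; let Hd := fresh "Hd" in case (Rle_dec x 0); intro Hd; cbn [is_left]; [|apply Rnot_le_lt in Hd].

Lemma rpow0 p : rpow 0 p = 0.
Proof. drd 0%R; lra. Qed.

Lemma rpow_pos x p : 0 < x -> rpow x p = Rpower x p.
Proof. intros; drd x; lra. Qed.

Lemma rpow_ge0 x p : 0 <= rpow x p.
Proof. drd x. lra. unfold Rpower; left; apply exp_pos. Qed.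

Lemma rpow_gt0 x p : 0 < x -> 0 < rpow x p.
Proof. intros; rewrite rpow_pos //; unfold Rpower; apply exp_pos. Qed.

Lemma rpow_gt0_inv x p : 0 < rpow x p -> 0 < x.
Proof. drd x; lra. Qed.

Lemma rpow_le a b p : 0 <= p -> 0 <= a <= b -> rpow a p <= rpow b p.
Proof.
intros Hp [Ha Hab]. destruct Ha as [Ha|Ha].
- rewrite !rpow_pos; try lra. apply Rle_Rpower_l; lra.
- subst. rewrite rpow0. apply rpow_ge0.
Qed.

Lemma rpow_mul a b p : 0 <= a -> 0 <= b -> rpow (a*b) p = rpow a p * rpow b p.
Proof.
intros [Ha|Ha] [Hb|Hb].
- rewrite !rpow_pos; try nra. now rewrite Rpower_mult_distr.
- subst; rewrite Rmult_0_r !rpow0; ring.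
- subst; rewrite Rmult_0_l !rpow0; ring.
- subst; rewrite Rmult_0_l !rpow0; ring.
Qed.

Lemma rpow_invK a p : 0 < p -> 0 <= a -> rpow (rpow a (/p)) p = a.
Proof.
intros Hp [Ha|Ha].
- rewrite (rpow_pos a) // rpow_pos. 2: unfold Rpower; apply exp_pos.
  rewrite Rpower_mult Rinv_l; [|lra]. now apply Rpower_1.
- subst; now rewrite !rpow0.
Qed.

Lemma rpow_1 x : 0 <= x -> rpow x 1 = x.
Proof. intros [H|H]. rewrite rpow_pos //; now apply Rpower_1. subst; apply rpow0. Qed.

Lemma rpow_ge1 x p : 1 <= x -> 0 <= p -> 1 <= rpow x p.
Proof.
intros Hx Hp. rewrite rpow_pos; [|lra]. rewrite <- (Rpower_O x) at 1; [|lra].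
apply Rle_Rpower; lra.
Qed.

Lemma rpow_le1 x p : 0 < x <= 1 -> 0 <= p -> rpow x p <= 1.
Proof.
intros Hx Hp. rewrite rpow_pos; [|lra]. unfold Rpower.
rewrite <- exp_0. destruct (Rle_lt_or_eq_dec _ _ (proj2 Hx)) as [H|H].
- assert (ln x < 0) by (rewrite <- ln_1; apply ln_increasing; lra).
  destruct (Rle_lt_or_eq_dec _ _ Hp) as [H1|H1].
  + left; apply exp_increasing; nra.
  + subst; rewrite Rmult_0_l; lra.
- subst; rewrite ln_1 Rmult_0_r; lra.
Qed.

Lemma bernoulli x p : 1 <= p -> 0 <= x -> 1 + p * (x - 1) <= rpow x p.
Proof.
intros Hp Hx. destruct Hx as [Hx|Hx]; [|subst; rewrite rpow0; lra].
set (phi := fun t => Rpower t p - 1 - p * (t - 1)).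
set (phi' := fun t => p * Rpower t (p - 1) - p).
assert (D : forall c, 0 < c -> derivable_pt_lim phi c (phi' c)).
{ intros c Hc. unfold phi, phi'.
  replace (p * Rpower c (p - 1) - p) with (p * Rpower c (p - 1) - 0 - p * (1 - 0)) by ring.
  apply derivable_pt_lim_minus. apply derivable_pt_lim_minus.
  now apply derivable_pt_lim_power. apply derivable_pt_lim_const.
  apply derivable_pt_lim_scal. apply derivable_pt_lim_minus.
  apply derivable_pt_lim_id. apply derivable_pt_lim_const. }
rewrite rpow_pos //.
assert (phi 1 = 0) by (unfold phi, Rpower; rewrite ln_1 Rmult_0_r exp_0; lra).
destruct (Rtotal_order x 1) as [Hl|[He|Hg]].
- destruct (MVT_cor2 phi phi' x 1 Hl) as [c [Hc1 Hc2]].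
  { intros c Hc; apply D; lra. }
  assert (Rpower c (p-1) <= 1).
  { rewrite <- (rpow_pos c) by lra. apply rpow_le1; lra. }
  assert (phi' c <= 0) by (unfold phi'; nra).
  assert (phi x >= 0) by nra. unfold phi in *; lra.
- subst. unfold Rpower; rewrite ln_1 Rmult_0_r exp_0; lra.
- destruct (MVT_cor2 phi phi' 1 x Hg) as [c [Hc1 Hc2]].
  { intros c Hc; apply D; lra. }
  assert (1 <= Rpower c (p-1)).
  { rewrite <- (rpow_pos c) by lra. apply rpow_ge1; lra. }
  assert (phi' c >= 0) by (unfold phi'; nra).
  assert (phi x >= 0) by nra. unfold phi in *; lra.
Qed.

Lemma RplusA : associative Rplus. Proof. intros a b c; ring. Qed.
Lemma RplusC : commutative Rplus. Proof. intros a b; ring. Qed.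
Lemma Rplus0l : left_id 0 Rplus. Proof. intros a; ring. Qed.
HB.instance Definition _ := Monoid.isComLaw.Build R 0 Rplus RplusA RplusC Rplus0l.

Section Sums.
Context {I : Type} (r : seq I) (P : pred I).

Lemma rsum_le (F G : I -> R) : (forall i, P i -> F i <= G i) ->
  \big[Rplus/0]_(i <- r | P i) F i <= \big[Rplus/0]_(i <- r | P i) G i.
Proof.
intros H. apply (big_ind2 (fun a b => a <= b)); [lra| intros; lra | auto].
Qed.

Lemma rsum_ge0 (F : I -> R) : (forall i, P i -> 0 <= F i) ->
  0 <= \big[Rplus/0]_(i <- r | P i) F i.
Proof. intros H. apply (big_ind (fun a => 0 <= a)); [lra| intros; lra | auto]. Qed.

Lemma rsum_scal c (F : I -> R) :
  c * \big[Rplus/0]_(i <- r | P i) F i = \big[Rplus/0]_(i <- r | P i) (c * F i).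
Proof.
apply (big_morph (fun x => c * x)). intros a b; ring. ring.
Qed.

Lemma rsum_add (F G : I -> R) :
  \big[Rplus/0]_(i <- r | P i) (F i + G i) =
  \big[Rplus/0]_(i <- r | P i) F i + \big[Rplus/0]_(i <- r | P i) G i.
Proof. apply big_split. Qed.

Lemma jensen p (F : I -> R) : 1 <= p -> (forall i, P i -> 0 <= F i) ->
  let K := \big[Rplus/0]_(i <- r | P i) 1 in 0 < K ->
  rpow (\big[Rplus/0]_(i <- r | P i) F i / K) p <=
  \big[Rplus/0]_(i <- r | P i) rpow (F i) p / K.
Proof.
intros Hp HF K HK. set (S := \big[Rplus/0]_(i <- r | P i) F i).
assert (HS : 0 <= S) by (apply rsum_ge0; auto).
set (M := S / K).
assert (HM : 0 <= M) by (unfold M, Rdiv; apply Rmult_le_pos; [lra| left; now apply Rinv_0_lt_compat]).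
destruct HM as [HM|HM].
2:{ rewrite <- HM, rpow0. unfold Rdiv. apply Rmult_le_pos. apply rsum_ge0; intros; apply rpow_ge0.
    left; now apply Rinv_0_lt_compat. }
apply Rmult_le_reg_r with K; auto. unfold Rdiv. rewrite Rmult_assoc Rinv_l; [|lra]. rewrite Rmult_1_r.
apply Rle_trans with (\big[Rplus/0]_(i <- r | P i) (rpow M p * (1 + p * (F i / M - 1)))).
- rewrite <- rsum_scal.
  assert (E : \big[Rplus/0]_(i <- r | P i) (1 + p * (F i / M - 1)) = K).
  { transitivity (\big[Rplus/0]_(i <- r | P i) (1 + ((p / M) * F i + (- p) * 1))).
    apply eq_bigr; intros i _; field; lra.
    rewrite !rsum_add -!rsum_scal. fold S K. unfold M. field. split; [lra|]. intro H0; unfold M in HM; rewrite H0 in HM; unfold Rdiv in HM; rewrite Rmult_0_l in HM; lra. }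
  rewrite E. fold M. lra.
- apply rsum_le. intros i Hi.
  replace (rpow (F i) p) with (rpow M p * rpow (F i / M) p).
  apply Rmult_le_compat_l. apply rpow_ge0. apply bernoulli; auto.
  unfold Rdiv; apply Rmult_le_pos; [auto| left; now apply Rinv_0_lt_compat].
  rewrite <- rpow_mul; [|lra|]. f_equal. field. lra.
  unfold Rdiv; apply Rmult_le_pos; [auto| left; now apply Rinv_0_lt_compat].
Qed.
End Sums.

Lemma jensen_sum {I : Type} (r : seq I) (P : pred I) p (F : I -> R) : 1 <= p ->
  (forall i, P i -> 0 <= F i) ->
  let K := \big[Rplus/0]_(i <- r | P i) 1 in 0 < K ->
  rpow (\big[Rplus/0]_(i <- r | P i) F i) p <=
  rpow K p * / K * \big[Rplus/0]_(i <- r | P i) rpow (F i) p.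
Proof.
intros Hp HF K HK.
assert (HS : 0 <= \big[Rplus/0]_(i <- r | P i) F i) by (apply rsum_ge0; auto).
replace (\big[Rplus/0]_(i <- r | P i) F i) with (K * (\big[Rplus/0]_(i <- r | P i) F i / K))
  by (field; lra).
rewrite rpow_mul; [| lra | unfold Rdiv; apply Rmult_le_pos; [lra | left; now apply Rinv_0_lt_compat]].
rewrite Rmult_assoc. apply Rmult_le_compat_l. apply rpow_ge0.
rewrite Rmult_comm. apply (jensen r P p F Hp HF HK).
Qed.

Lemma sum1_ord k : \big[Rplus/0]_(i < k) 1 = INR k.
Proof.
elim: k => [|k IH]. by rewrite big_ord0.
rewrite big_ord_recr IH S_INR //.
Qed.

Lemma jensen3 p a b c : 1 <= p -> 0 <= a -> 0 <= b -> 0 <= c ->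
  rpow (a + b + c) p <= rpow 3 p * / 3 * (rpow a p + rpow b p + rpow c p).
Proof.
intros Hp Ha Hb Hc.
have H := jensen_sum [:: 0%nat; 1%nat; 2%nat] predT p (fun i => nth 0 [:: a; b; c] i) Hp.
rewrite !big_cons !big_nil /= in H.
replace (a + b + c) with (a + (b + (c + 0))) by ring.
replace (rpow a p + rpow b p + rpow c p) with (rpow a p + (rpow b p + (rpow c p + 0))) by ring.
replace 3 with (1 + (1 + (1 + 0))) by ring.
apply H; last lra. move=> [|[|[|i]]] _ /=; try lra. rewrite nth_nil; lra.
Qed.

Section Vec.
Variable X : Banach.
Implicit Types x y z u v w : X.
Local Notation "0v" := (vzero X).

Lemma vadd0l x : vadd 0v x = x.
Proof. by rewrite vaddC vadd0. Qed.

Lemma vaddNl x : vadd (vopp x) x = 0v.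
Proof. by rewrite vaddC vaddN. Qed.

Lemma vadd_cancel x y z : vadd x y = vadd x z -> y = z.
Proof.
intros H. rewrite -(vadd0l y) -(vadd0l z) -(vaddNl x) -!vaddA H //.
Qed.

Lemma vopp_unique x y : vadd x y = 0v -> y = vopp x.
Proof. intros H. apply (vadd_cancel x). by rewrite H vaddN. Qed.

Lemma vscal0l x : vscal 0 x = 0v.
Proof.
apply (vadd_cancel (vscal 0 x)). rewrite vadd0 -vscalDl. f_equal; ring.
Qed.

Lemma vscal0r a : vscal a 0v = 0v.
Proof. by rewrite -(vscal0l 0v) vscalA Rmult_0_r. Qed.

Lemma vscalN1 x : vscal (-1) x = vopp x.
Proof.
apply vopp_unique. rewrite -{1}(vscal1 x) -vscalDl.
replace (1 + -1) with 0 by ring. apply vscal0l.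
Qed.

Lemma voppK x : vopp (vopp x) = x.
Proof. symmetry; apply vopp_unique. apply vaddNl. Qed.

Lemma vopp_add x y : vopp (vadd x y) = vadd (vopp x) (vopp y).
Proof.
symmetry; apply vopp_unique.
rewrite vaddA -(vaddA x y) (vaddC y) vaddA vaddN vadd0l vaddN //.
Qed.

Lemma vscalN a x : vscal a (vopp x) = vopp (vscal a x).
Proof. by rewrite -!vscalN1 !vscalA Rmult_comm. Qed.

Lemma vnormN x : vnorm (vopp x) = vnorm x.
Proof. rewrite -vscalN1 vnormZ Rabs_Ropp Rabs_R1; ring. Qed.

Lemma vnorm0 : vnorm 0v = 0.
Proof. rewrite -(vscal0l 0v) vnormZ Rabs_R0; ring. Qed.

Lemma vsub_opp x y : vsub y x = vopp (vsub x y).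
Proof. by rewrite /vsub vopp_add voppK vaddC. Qed.

Lemma vnorm_subC x y : vnorm (vsub x y) = vnorm (vsub y x).
Proof. by rewrite vsub_opp vnormN. Qed.

Lemma vsub_chain x y z : vsub x z = vadd (vsub x y) (vsub y z).
Proof. by rewrite /vsub -vaddA (vaddA (vopp y)) vaddNl vadd0l. Qed.

Lemma vsub_tri x y z : vnorm (vsub x z) <= vnorm (vsub x y) + vnorm (vsub y z).
Proof. rewrite (vsub_chain x y z). apply vnorm_tri. Qed.

Lemma vaddA' : associative (@vadd X). Proof. intros a b c; by rewrite vaddA. Qed.
Lemma vaddC' : commutative (@vadd X). Proof. intros a b; apply vaddC. Qed.
Lemma vadd0l' : left_id 0v (@vadd X). Proof. intros a; apply vadd0l. Qed.
HB.instance Definition _ := Monoid.isComLaw.Build (carrier X) 0v (@vadd X) vaddA' vaddC' vadd0l'.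

Section S.
Context {I : Type} (r : seq I) (P : pred I).

Lemma vnorm_sum (F : I -> X) :
  vnorm (\big[@vadd X/0v]_(i <- r | P i) F i) <= \big[Rplus/0]_(i <- r | P i) vnorm (F i).
Proof.
apply (big_ind2 (fun a b => vnorm a <= b)).
- rewrite vnorm0; lra.
- intros a b c d H1 H2. apply Rle_trans with (vnorm a + vnorm c). apply vnorm_tri. lra.
- intros; lra.
Qed.

Lemma vscal_sum a (F : I -> X) :
  vscal a (\big[@vadd X/0v]_(i <- r | P i) F i) = \big[@vadd X/0v]_(i <- r | P i) vscal a (F i).
Proof. apply (big_morph (vscal a)). intros ? ?; apply vscalDr. apply vscal0r. Qed.

Lemma vopp_sum (F : I -> X) :
  vopp (\big[@vadd X/0v]_(i <- r | P i) F i) = \big[@vadd X/0v]_(i <- r | P i) vopp (F i).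
Proof.
apply (big_morph (@vopp X)). intros ? ?; apply vopp_add.
symmetry; apply vopp_unique; apply vadd0.
Qed.

Lemma vsub_sum (F G : I -> X) :
  vsub (\big[@vadd X/0v]_(i <- r | P i) F i) (\big[@vadd X/0v]_(i <- r | P i) G i)
  = \big[@vadd X/0v]_(i <- r | P i) vsub (F i) (G i).
Proof. by rewrite /vsub vopp_sum -big_split. Qed.
End S.

Lemma vsum_const (T : finType) (A : pred T) w :
  \big[@vadd X/0v]_(i in A) w = vscal (INR #|A|) w.
Proof.
rewrite big_const. elim: #|A| => [|k IH]. by rewrite /= vscal0l.
rewrite iterS IH S_INR vscalDl vscal1 vaddC //.
Qed.

End Vec.

Section V2.
Variable X : Banach.
Lemma vsum_constP {I : Type} (r : seq I) (P : pred I) (w : X) :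
  \big[@vadd X/vzero X]_(i <- r | P i) w = vscal (\big[Rplus/0]_(i <- r | P i) 1) w.
Proof.
apply (big_rec2 (fun a b => a = vscal b w)). by rewrite vscal0l.
intros i a b _ ->. by rewrite vscalDl vscal1.
Qed.

Lemma vsub_scal (c : R) (a b : X) : vsub (vscal c a) (vscal c b) = vscal c (vsub a b).
Proof. by rewrite /vsub vscalDr vscalN. Qed.
End V2.
Set Implicit Arguments. Unset Strict Implicit. Unset Printing Implicit Defensive.
Local Close Scope R_scope.

Definition flipj n (j : 'I_n) (d : {ffun 'I_n -> bool}) : {ffun 'I_n -> bool} :=
  [ffun i => if i == j then ~~ d i else d i].

Lemma flipjK n (j : 'I_n) : involutive (flipj j).
Proof.
move=> d; apply/ffunP => i; rewrite !ffunE; case: (i == j) => //; exact: negbK.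
Qed.

Lemma flipj_inj n (j : 'I_n) : injective (flipj j).
Proof. exact: (inv_inj (flipjK j)). Qed.

Lemma flipj_j n (j : 'I_n) d : flipj j d j = ~~ d j.
Proof. by rewrite ffunE eqxx. Qed.

Section Grid.
Variables (N n : nat).
Implicit Types x y : {ffun 'I_n -> 'I_N}.

Lemma addmod_val (x : 'I_N) a : val (addmod x a) = (x + a) %% N.
Proof. by []. Qed.

Lemma addmodA (x : 'I_N) a b : addmod (addmod x a) b = addmod x (a + b).
Proof. apply: val_inj; rewrite /= modnDml addnA //. Qed.

Lemma addmod0 (x : 'I_N) : addmod x 0 = x.
Proof. apply: val_inj; rewrite /= addn0 modn_small //. Qed.

Lemma addmod_inj (x y : 'I_N) a : addmod x a = addmod y a -> x = y.
Proof.
move=> /(congr1 val) /= /eqP; rewrite eqn_modDr !modn_small // => /eqP H.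
exact: val_inj.
Qed.

Lemma shift_dir0 x j : shift_dir x j 0 = x.
Proof. apply/ffunP => i; rewrite ffunE; case: eqP => [->|] //; exact: addmod0. Qed.

Lemma shift_dirD x j a b : shift_dir (shift_dir x j a) j b = shift_dir x j (a + b).
Proof.
apply/ffunP => i; rewrite !ffunE; case: eqP => [->|] //; rewrite addmodA //.
Qed.

Lemma shift_dir_inj j a : injective (fun x => shift_dir x j a).
Proof.
move=> x y /= H; apply/ffunP => i; move/ffunP: H => /(_ i); rewrite !ffunE.
case: eqP => // _; exact: addmod_inj.
Qed.

Lemma shift_flip y j (d : {ffun 'I_n -> bool}) : 0 < N -> d j ->
  shift_sign (shift_dir y j 2) (flipj j d) = shift_sign y d.
Proof.
move=> HN Hd; apply/ffunP => i; rewrite !ffunE.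
case: eqP => [->|_]; last by [].
rewrite Hd /= addmodA; apply: val_inj => /=.
rewrite (_ : 2 + N.-1 = 1 + N); last by case: N HN.
by rewrite addnA modnDr.
Qed.
End Grid.
Local Open Scope R_scope.
Lemma iter_one k : iter k (Rplus 1) 0 = INR k.
Proof. elim: k => [|k IH] //. rewrite iterS IH S_INR; ring. Qed.
Lemma sum1_fin (T : finType) : \big[Rplus/0]_(i : T) 1 = INR #|T|.
Proof.
rewrite big_const_seq count_predT -iter_one; congr (iter _ _ _).
by rewrite cardT enumT.
Qed.
Lemma INR_exp2 n : INR (expn 2 n) = 2 ^ n.
Proof. elim: n => [|n IH] //. rewrite expnS mult_INR IH /=. ring. Qed.
Lemma card_S n : #|{ffun 'I_n -> bool}| = expn 2 n.
Proof. by rewrite card_ffun card_bool card_ord. Qed.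

Section Main.
Variables (X : Banach) (p : R) (m n : nat) (f : {ffun 'I_n -> 'I_(8*m)} -> X).
Hypothesis Hp : 1 <= p.
Hypothesis Hm : (0 < m)%nat.
Local Notation V := {ffun 'I_n -> 'I_(8*m)}.
Local Notation S := {ffun 'I_n -> bool}.
Local Notation vs := (@vadd X).
Local Notation v0 := (vzero X).

Definition Ex (x : V) := \big[Rplus/0]_(e : S) rpow (vnorm (vsub (f (shift_sign x e)) (f x))) p.
Definition Kr (j : 'I_n) := \big[Rplus/0]_(d : S | d j) 1.
Definition W j (y : V) := \big[vs/v0]_(d : S | d j) f (shift_sign y d).
Definition g j (y : V) := vscal (/ Kr j) (W j y).
Definition hx (x : V) (d : S) := vsub (f (shift_sign x d)) (f x).
Definition rho j (x : V) :=
  vscal (/ 2 ^ n) (\big[vs/v0]_(d : S) vscal (sgnR (d j)) (hx x d)).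

Lemma Kr2 j : Kr j * 2 = 2 ^ n.
Proof.
have H1 : \big[Rplus/0]_(d : S) 1 = Kr j + Kr j.
  rewrite (bigID (fun d : S => d j)) /=; congr (_ + _).
  rewrite (reindex_inj (@flipj_inj n j)) /=; apply: eq_bigl => d; by rewrite flipj_j negbK.
rewrite sum1_fin card_S INR_exp2 in H1. lra.
Qed.

Lemma Kr_pos j : 0 < Kr j.
Proof. have := Kr2 j. have := pow_lt 2 n. lra. Qed.

Lemma rad_id j x : \big[vs/v0]_(d : S) vscal (sgnR (d j)) (hx x d) =
  \big[vs/v0]_(d : S | d j) vsub (f (shift_sign x d)) (f (shift_sign x (flipj j d))).
Proof.
rewrite (bigID (fun d : S => d j)) /=.
rewrite [X in vs _ X](reindex_inj (@flipj_inj n j)) /=.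
rewrite [X in vs _ X](eq_bigl (fun d : S => d j)); last by move=> d; rewrite flipj_j negbK.
rewrite -big_split /=; apply: eq_bigr => d Hd.
rewrite flipj_j Hd /= vscal1 vscalN1 /hx -vsub_opp -vsub_chain //.
Qed.

Lemma W_diff j y : vsub (W j (shift_dir y j 2)) (W j y) =
  \big[vs/v0]_(d : S | d j) vsub (f (shift_sign (shift_dir y j 2) d))
                                   (f (shift_sign (shift_dir y j 2) (flipj j d))).
Proof.
rewrite /W vsub_sum; apply: eq_bigr => d Hd. rewrite shift_flip //.
by rewrite muln_gt0.
Qed.

Lemma gdiff j y : vnorm (vsub (g j (shift_dir y j 2)) (g j y)) =
  2 * vnorm (rho j (shift_dir y j 2)).
Proof.
rewrite /g /rho vsub_scal W_diff rad_id !vnormZ.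
have HK := Kr2 j. have HK' := Kr_pos j. have H2 := pow_lt 2 n ltac:(lra).
rewrite !Rabs_right; try (left; apply Rinv_0_lt_compat; lra).
assert (E : / Kr j = 2 * / 2 ^ n) by (rewrite -HK; field; lra). rewrite E. ring.
Qed.

Lemma err j y : vnorm (vsub (g j y) (f y)) <=
  / Kr j * \big[Rplus/0]_(d : S | d j) vnorm (vsub (f (shift_sign y d)) (f y)).
Proof.
have HK' := Kr_pos j.
have -> : vsub (g j y) (f y) =
    vscal (/ Kr j) (\big[vs/v0]_(d : S | d j) vsub (f (shift_sign y d)) (f y)).
  rewrite -vsub_sum vsum_constP -/(Kr j) -vsub_scal vscalA Rinv_l; last lra.
  by rewrite vscal1.
rewrite vnormZ Rabs_right; last (left; apply Rinv_0_lt_compat; lra).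
apply Rmult_le_compat_l; first (left; apply Rinv_0_lt_compat; lra).
apply vnorm_sum.
Qed.

Lemma errP j y : rpow (vnorm (vsub (g j y) (f y))) p <= / Kr j * Ex y.
Proof.
have HK' := Kr_pos j.
apply Rle_trans with
  (rpow (\big[Rplus/0]_(d : S | d j) vnorm (vsub (f (shift_sign y d)) (f y)) / Kr j) p).
  apply rpow_le; first lra. split; first apply vnorm_ge0.
  rewrite /Rdiv Rmult_comm; apply err.
apply Rle_trans with
  (\big[Rplus/0]_(d : S | d j) rpow (vnorm (vsub (f (shift_sign y d)) (f y))) p / Kr j).
  apply (jensen _ _ p _ Hp) => //; move=> i _; apply vnorm_ge0.
rewrite /Rdiv Rmult_comm; apply Rmult_le_compat_l; first (left; apply Rinv_0_lt_compat; lra).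
rewrite /Ex [X in _ <= X](bigID (fun d : S => d j)) /=.
have := rsum_ge0 (index_enum S) (fun d : S => ~~ d j)
   (fun d => rpow (vnorm (vsub (f (shift_sign y d)) (f y))) p) (fun _ _ => rpow_ge0 _ _).
move=> H0. rewrite -[X in X <= _]Rplus_0_r; apply Rplus_le_compat; [right; reflexivity|exact H0].
Qed.

Lemma cot_step C K x : cotype_const X p C -> Kconvex_const X p K ->
  \big[Rplus/0]_(j : 'I_n) rpow (vnorm (rho j x)) p <= rpow C p * rpow K p * (/ 2 ^ n * Ex x).
Proof.
move=> [HC Hcot] [HK Hkc].
have H1 := Hcot n (fun j => rho j x).
have H2 := Hkc n (hx x).
have H2n := pow_lt 2 n ltac:(lra).
set A := \big[Rplus/0]_(j : 'I_n) rpow (vnorm (rho j x)) p.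
set B := / 2 ^ n * \big[Rplus/0]_(e : S)
   rpow (vnorm (vsum (fun j => vscal (sgnR (e j)) (rho j x)))) p.
have HA : 0 <= A by apply rsum_ge0 => i _; apply rpow_ge0.
have HB : 0 <= B.
  apply Rmult_le_pos; first (left; apply Rinv_0_lt_compat; lra).
  apply rsum_ge0 => i _; apply rpow_ge0.
fold A B in H1.
rewrite -(rpow_invK A p); [|lra|exact HA].
apply Rle_trans with (rpow (C * rpow B (/p)) p).
  apply rpow_le; [lra| split; [apply rpow_ge0| exact H1]].
rewrite rpow_mul; [|lra|apply rpow_ge0]. rewrite rpow_invK; [|lra|exact HB].
rewrite Rmult_assoc. apply Rmult_le_compat_l; first apply rpow_ge0.
rewrite /B. rewrite (Rmult_comm (rpow K p)) Rmult_assoc.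
apply Rmult_le_compat_l; first (left; apply Rinv_0_lt_compat; lra).
rewrite Rmult_comm. exact H2.
Qed.

Lemma chain (a : nat -> X) k :
  vnorm (vsub (a k) (a 0%nat)) <= \big[Rplus/0]_(i < k) vnorm (vsub (a i.+1) (a i)).
Proof.
elim: k => [|k IH].
  rewrite big_ord0 /vsub vaddN vnorm0; lra.
rewrite big_ord_recr /=.
apply Rle_trans with (vnorm (vsub (a k.+1) (a k)) + vnorm (vsub (a k) (a 0%nat))).
  rewrite Rplus_comm. rewrite Rplus_comm. apply vsub_tri.
rewrite (Rplus_comm (vnorm _)); apply Rplus_le_compat; [exact IH|right; reflexivity].
Qed.

Definition cpt (j : 'I_n) (x : V) (k : nat) := shift_dir x j (2 * k).

Lemma cptS j x k : cpt j x k.+1 = shift_dir (cpt j x k) j 2.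
Proof. by rewrite /cpt shift_dirD mulnS addnC. Qed.

Lemma perx_norm j x :
  vnorm (vsub (f (shift_dir x j (4 * m))) (f x)) <=
  vnorm (vsub (g j (cpt j x (2 * m))) (f (cpt j x (2 * m))))
  + \big[Rplus/0]_(k < (2 * m)%nat) (2 * vnorm (rho j (cpt j x k.+1)))
  + vnorm (vsub (g j x) (f x)).
Proof.
have E : shift_dir x j (4 * m) = cpt j x (2 * m) by rewrite /cpt mulnA.
rewrite E.
apply Rle_trans with (vnorm (vsub (f (cpt j x (2 * m))) (g j (cpt j x (2 * m))))
   + vnorm (vsub (g j (cpt j x (2 * m))) (f x))); first by apply vsub_tri.
rewrite vnorm_subC Rplus_assoc; apply Rplus_le_compat_l.
apply Rle_trans with (vnorm (vsub (g j (cpt j x (2 * m))) (g j x)) + vnorm (vsub (g j x) (f x)));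
  first by apply vsub_tri.
apply Rplus_le_compat_r.
have H := chain (fun k => g j (cpt j x k)) (2 * m).
have E0 : cpt j x 0 = x by rewrite /cpt muln0 shift_dir0.
rewrite /= E0 in H. apply: (Rle_trans _ _ _ H).
right; apply: eq_bigr => k _. by rewrite cptS gdiff.
Qed.

Lemma shift_sum (F : V -> R) j a :
  \big[Rplus/0]_(x : V) F (shift_dir x j a) = \big[Rplus/0]_(x : V) F x.
Proof. by rewrite [RHS](reindex_inj (@shift_dir_inj (8*m) n j a)). Qed.

Lemma INR2m_pos : 0 < INR (2 * m).
Proof. apply lt_0_INR; apply/ltP; by rewrite muln_gt0 Hm. Qed.

Lemma perj j :
  \big[Rplus/0]_(x : V) rpow (vnorm (vsub (f (shift_dir x j (4 * m))) (f x))) p <=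
  rpow 3 p * / 3 * (2 * (/ Kr j * \big[Rplus/0]_(x : V) Ex x)
    + rpow (INR (2 * m)) p * rpow 2 p *
      \big[Rplus/0]_(x : V) rpow (vnorm (rho j x)) p).
Proof.
have HK := Kr_pos j. have H2m := INR2m_pos.
set T := \big[Rplus/0]_(x : V) Ex x.
set Rj := \big[Rplus/0]_(x : V) rpow (vnorm (rho j x)) p.
set a1 := fun x => vnorm (vsub (g j (cpt j x (2 * m))) (f (cpt j x (2 * m)))).
set Md := fun x => \big[Rplus/0]_(k < (2 * m)%nat) (2 * vnorm (rho j (cpt j x k.+1))).
set a2 := fun x => vnorm (vsub (g j x) (f x)).
apply Rle_trans with (\big[Rplus/0]_(x : V)
   (rpow 3 p * / 3 * (rpow (a1 x) p + rpow (Md x) p + rpow (a2 x) p))).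
  apply rsum_le => x _.
  apply Rle_trans with (rpow (a1 x + Md x + a2 x) p).
    apply rpow_le; first lra. split; [apply vnorm_ge0| apply perx_norm].
  apply jensen3 => //; try apply vnorm_ge0.
  apply rsum_ge0 => k _; have := vnorm_ge0 (rho j (cpt j x k.+1)); lra.
rewrite -rsum_scal. apply Rmult_le_compat_l.
  apply Rmult_le_pos; [apply rpow_ge0| lra].
rewrite !rsum_add.
have B1 : \big[Rplus/0]_(x : V) rpow (a1 x) p <= / Kr j * T.
  rewrite /T rsum_scal.
  rewrite -(shift_sum (fun x => / Kr j * Ex x) j (2 * (2 * m))).
  apply rsum_le => x _; apply errP.
have B2 : \big[Rplus/0]_(x : V) rpow (a2 x) p <= / Kr j * T.
  rewrite /T rsum_scal. apply rsum_le => x _; apply errP.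
have B3 : \big[Rplus/0]_(x : V) rpow (Md x) p <=
    rpow (INR (2 * m)) p * rpow 2 p * Rj.
  apply Rle_trans with (\big[Rplus/0]_(x : V) (rpow (INR (2 * m)) p * / INR (2 * m) *
      \big[Rplus/0]_(k < (2 * m)%nat) (rpow 2 p * rpow (vnorm (rho j (cpt j x k.+1))) p))).
    apply rsum_le => x _.
    have J := jensen_sum (index_enum 'I_(2 * m)) predT p
      (fun k : 'I_(2 * m) => 2 * vnorm (rho j (cpt j x k.+1))) Hp.
    rewrite sum1_ord in J.
    apply: Rle_trans; first apply J => //.
      move=> k _; have := vnorm_ge0 (rho j (cpt j x k.+1)); lra.
    right; f_equal; apply eq_bigr => k _; rewrite rpow_mul //; [lra|apply vnorm_ge0].
  rewrite -rsum_scal !Rmult_assoc. apply Rmult_le_compat_l; first apply rpow_ge0.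
  rewrite exchange_big /=.
  have -> : \big[Rplus/0]_(k < (2 * m)%nat) \big[Rplus/0]_(x : V)
      (rpow 2 p * rpow (vnorm (rho j (cpt j x k.+1))) p) =
      \big[Rplus/0]_(k < (2 * m)%nat) (rpow 2 p * Rj).
    apply eq_bigr => k _. rewrite -rsum_scal; f_equal.
    rewrite /Rj -(shift_sum (fun x => rpow (vnorm (rho j x)) p) j (2 * k.+1)) //.
  rewrite -rsum_scal.
  have -> : \big[Rplus/0]_(k < (2*m)%nat) Rj = Rj * INR (2*m) by rewrite -sum1_ord rsum_scal; apply eq_bigr => *; ring.
  right; field; lra.
apply Rle_trans with (/ Kr j * T + rpow (INR (2 * m)) p * rpow 2 p * Rj + / Kr j * T).
  apply Rplus_le_compat; [apply Rplus_le_compat|]; [exact B1|exact B3|exact B2].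
right; ring.
Qed.

Lemma main_pos C K : cotype_const X p C -> Kconvex_const X p K ->
  \big[Rplus/0]_(j : 'I_n) \big[Rplus/0]_(x : V)
     rpow (vnorm (vsub (f (shift_dir x j (4 * m))) (f x))) p <=
  rpow 3 p * / 3 * (4 * INR n * (/ 2 ^ n * \big[Rplus/0]_(x : V) Ex x)
    + rpow (INR (2 * m)) p * rpow 2 p *
      (rpow C p * rpow K p * (/ 2 ^ n * \big[Rplus/0]_(x : V) Ex x))).
Proof.
move=> HC HK.
set T := \big[Rplus/0]_(x : V) Ex x.
have H2n := pow_lt 2 n ltac:(lra).
apply Rle_trans with (\big[Rplus/0]_(j : 'I_n) (rpow 3 p * / 3 * (4 * (/ 2 ^ n * T)
    + rpow (INR (2 * m)) p * rpow 2 p *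
      \big[Rplus/0]_(x : V) rpow (vnorm (rho j x)) p))).
  apply rsum_le => j _. apply: Rle_trans; first apply perj.
  right; f_equal; f_equal.
  have HK2 := Kr2 j. have HK' := Kr_pos j.
  rewrite -HK2 -/T. field. lra.
rewrite -rsum_scal. apply Rmult_le_compat_l; first (apply Rmult_le_pos; [apply rpow_ge0|lra]).
rewrite rsum_add. apply Rplus_le_compat.
  right. rewrite -(Rmult_1_r (4 * (/ 2 ^ n * T))) -rsum_scal sum1_ord. ring.
rewrite -rsum_scal. apply Rmult_le_compat_l.
  apply Rmult_le_pos; apply rpow_ge0.
rewrite exchange_big /=.
rewrite /T rsum_scal rsum_scal.
apply rsum_le => x _.
apply: Rle_trans; [apply (cot_step x HC HK)|right; ring].
Qed.
End Main.

Lemma cot0_norm (X : Banach) p (v : X) : 1 <= p -> cotype_const X p 0 -> vnorm v = 0.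
Proof.
move=> Hp [_ H]. have := H 1%nat (fun _ => v). rewrite big_ord1 Rmult_0_l => H1.
case: (vnorm_ge0 v) => // Hv.
have := rpow_gt0 _ (/ p) (rpow_gt0 _ p Hv). lra.
Qed.

Lemma final_arith a q u p2 p3 nn pck :
  0 < a -> 0 <= q -> 0 <= u -> 2 <= p2 -> 0 <= p3 -> nn <= a * q -> 0 <= pck -> pck <= q ->
  / a * (p3 * / 3 * (4 * nn * u + a * (p2 * p2) * (pck * u))) <= p3 * (p2 * p2 * p2) * q * u.
Proof.
move=> Ha Hq Hu H2 H3 Hn Hc1 Hc2.
have E : / a * (p3 * / 3 * (4 * nn * u + a * (p2 * p2) * (pck * u))) =
    p3 * / 3 * (4 * (nn / a) * u + p2 * p2 * pck * u) by field; lra.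
rewrite E.
have Hna : nn / a <= q.
  apply Rmult_le_reg_r with a => //. unfold Rdiv; rewrite Rmult_assoc Rinv_l; lra.
apply Rle_trans with (p3 * / 3 * (4 * q * u + p2 * p2 * q * u)).
  apply Rmult_le_compat_l; first nra.
  apply Rplus_le_compat.
    apply Rmult_le_compat_r => //; lra.
  apply Rmult_le_compat_r => //. apply Rmult_le_compat_l => //; nra.
have Hp1 : 0 <= p2 * p2 * (p2 - 2).
  apply Rmult_le_pos; nra.
have Hp0 : 4 + p2 * p2 <= 3 * (p2 * p2 * p2) by nra.
have Hp : (4 + p2 * p2) / 3 <= p2 * p2 * p2 by lra.
have Hqu : 0 <= p3 * q * u by (apply Rmult_le_pos; [apply Rmult_le_pos|]; lra).
replace (p3 * / 3 * (4 * q * u + p2 * p2 * q * u)) with (p3 * q * u * ((4 + p2 * p2) / 3)) by (field).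
replace (p3 * (p2 * p2 * p2) * q * u) with (p3 * q * u * (p2 * p2 * p2)) by ring.
apply Rmult_le_compat_l => //.
Qed.

Theorem mainTheorem14 :
  exists c : R, (0 < c)%R /\
  forall (p alpha : R) (X : Banach) (Cp Kp : R) (m n : nat)
         (f : {ffun 'I_n -> 'I_(8 * m)} -> X),
    (2 <= p)%R -> (1 <= alpha)%R ->
    cotype_constant X p Cp -> Kconvex_constant X p Kp ->
    (INR m >= rpow (INR n) (/ p) / (alpha * Kp * Cp))%R ->
    (\rsum_(j : 'I_n) \rsum_(x : {ffun 'I_n -> 'I_(8 * m)})
        (rpow (vnorm (vsub (f (shift_dir x j (4 * m))) (f x))) p / rpow (INR m) p)
     <= rpow c p *
        (rpow (alpha * Kp * Cp) p / 2 ^ n *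
         \rsum_(e : {ffun 'I_n -> bool}) \rsum_(x : {ffun 'I_n -> 'I_(8 * m)})
            rpow (vnorm (vsub (f (shift_sign x e)) (f x))) p))%R.
Proof.
exists 24; split; first lra.
move=> p alpha X Cp Kp m n f Hp2 Ha [HC _] [HK _] Hmn.
have Hp : 1 <= p by lra.
have H2n := pow_lt 2 n ltac:(lra).
have HR : 0 <= rpow 24 p * (rpow (alpha * Kp * Cp) p / 2 ^ n *
         \big[Rplus/0]_(e : {ffun 'I_n -> bool}) \big[Rplus/0]_(x : {ffun 'I_n -> 'I_(8 * m)})
            rpow (vnorm (vsub (f (shift_sign x e)) (f x))) p).
  apply Rmult_le_pos; first apply rpow_ge0.
  apply Rmult_le_pos.
    apply Rmult_le_pos; [apply rpow_ge0| left; apply Rinv_0_lt_compat; lra].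
  apply rsum_ge0 => e _; apply rsum_ge0 => x _; apply rpow_ge0.
case: m f Hmn HR => [|m] f Hmn HR.
  apply: Rle_trans HR. right. apply: big1 => j _. apply: big1 => x _.
  exfalso; move: (ltn_ord (x j)); move: (nat_of_ord (x j)) => k; by rewrite muln0.
have HC0 := proj1 HC. have HK1 := proj1 HK.
case: HC0 => HC0; last first.
  subst Cp. apply: Rle_trans HR. right. apply: big1 => j _. apply: big1 => x _.
  by rewrite (cot0_norm _ Hp HC) rpow0 /Rdiv Rmult_0_l.
set Q := alpha * Kp * Cp.
change (alpha * Kp * Cp) with Q in Hmn.
have HQ : 0 < Q by rewrite /Q; apply Rmult_lt_0_compat; [apply Rmult_lt_0_compat|]; lra.
have HmR : 0 < INR m.+1 by apply lt_0_INR; lia.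
set a := rpow (INR m.+1) p.
have Ha0 : 0 < a by apply rpow_gt0.
have Hn : INR n <= a * rpow Q p.
  rewrite /a -rpow_mul; [|lra|lra]. rewrite -(rpow_invK (INR n) p); [|lra|apply pos_INR].
  apply rpow_le; first lra. split; first apply rpow_ge0.
  replace (rpow (INR n) (/p)) with (rpow (INR n) (/p) / Q * Q) by (field; lra).
  apply Rmult_le_compat_r; lra.
have HM := main_pos f Hp (ltn0Sn m) HC HK.
set T := \big[Rplus/0]_(x : {ffun 'I_n -> 'I_(8 * m.+1)}) Ex p f x.
fold T in HM.
have ET : \big[Rplus/0]_(e : {ffun 'I_n -> bool}) \big[Rplus/0]_(x : {ffun 'I_n -> 'I_(8 * m.+1)})
            rpow (vnorm (vsub (f (shift_sign x e)) (f x))) p = T.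
  by rewrite exchange_big.
rewrite ET.
have E1 : \big[Rplus/0]_(j : 'I_n) \big[Rplus/0]_(x : {ffun 'I_n -> 'I_(8 * m.+1)})
        (rpow (vnorm (vsub (f (shift_dir x j (4 * m.+1))) (f x))) p / a) =
    / a * \big[Rplus/0]_(j : 'I_n) \big[Rplus/0]_(x : {ffun 'I_n -> 'I_(8 * m.+1)})
        rpow (vnorm (vsub (f (shift_dir x j (4 * m.+1))) (f x))) p.
  rewrite rsum_scal; apply eq_bigr => j _; rewrite rsum_scal; apply eq_bigr => x _.
  by rewrite /Rdiv Rmult_comm.
rewrite E1.
apply Rle_trans with (/ a * (rpow 3 p * / 3 * (4 * INR n * (/ 2 ^ n * T)
    + rpow (INR (2 * m.+1)) p * rpow 2 p * (rpow Cp p * rpow Kp p * (/ 2 ^ n * T))))).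
  apply Rmult_le_compat_l; [left; apply Rinv_0_lt_compat; lra| exact HM].
have E2 : rpow (INR (2 * m.+1)) p * rpow 2 p = a * (rpow 2 p * rpow 2 p).
  rewrite mult_INR rpow_mul; [|apply pos_INR|apply pos_INR]. replace (INR 2) with 2 by (simpl; lra). rewrite /a. ring.
have E3 : rpow 24 p = rpow 3 p * (rpow 2 p * rpow 2 p * rpow 2 p).
  rewrite -(rpow_mul 2 2 p); try lra. rewrite -(rpow_mul (2*2) 2 p); try lra.
  rewrite -(rpow_mul 3 (2*2*2) p); try lra. f_equal; ring.
rewrite E2 E3.
have HT : 0 <= / 2 ^ n * T.
  apply Rmult_le_pos; [left; apply Rinv_0_lt_compat; lra|].
  apply rsum_ge0 => x _; apply rsum_ge0 => e _; apply rpow_ge0.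
have Hck : rpow Cp p * rpow Kp p <= rpow Q p.
  rewrite -rpow_mul; [|lra|lra]. apply rpow_le; first lra. split; first nra.
  rewrite /Q. have : 0 <= (alpha - 1) * (Kp * Cp) by (apply Rmult_le_pos; nra). nra.
have Hq2 : 2 <= rpow 2 p by have := bernoulli 2 p Hp ltac:(lra); lra.
apply Rle_trans with (rpow 3 p * (rpow 2 p * rpow 2 p * rpow 2 p) * rpow Q p * (/ 2 ^ n * T)).
  apply final_arith => //; try apply rpow_ge0.
  apply Rmult_le_pos; apply rpow_ge0.
right; rewrite /Rdiv; ring.
Qed.
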